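(* Let $p_1,p_2$ be distinct odd primes. (1) If $n=p_1p_2$, then $\Omega_2(n)\neq\emptyset$. (2) If $n=p_1p_2^2n'$ or $n=2p_1p_2n'$ for some integer $n'\geq 1$, then $\Omega_2(n)=\emptyset$.
   Context: For an integer $n\ge 2$, let $\phi_2(n)=\{k\mid 0\le k\le n-1,\ \gcd(k,n)=2^w\text{ for some }w\ge0\}$, where an integer $k$ is regarded as an element of $\phi_2(n)$ when its residue modulo $n$ (taken in $\{0,\dots,n-1\}$) is, and $\gcd(0,n)=n$. Define $\Omega_2(n)$ to be the set of $i_0\in\mathbb{Z}_n$ such that for every odd integer $i$ with $1\le i\le n$ and $i\notin\phi_2(n)$ (i.e. $\gcd(i,n)$ is not a power of $2$), the element $i_0-i$ is invertible in $\mathbb{Z}_n$. *)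

(* Defs.v *)
From HB Require Import structures.
From mathcomp Require Import all_boot all_order all_algebra.
Set Implicit Arguments. Unset Strict Implicit. Unset Printing Implicit Defensive.
Import GRing.Theory.

(* k (an integer, regarded via its residue mod n in {0..n-1}) lies in phi_2(n)
   iff gcd(k mod n, n) is a power of 2 (with gcd(0,n) = n, as gcdn 0 n = n). *)
Definition in_phi2 (n k : nat) : Prop := exists w : nat, gcdn (k %% n) n = 2 ^ w.

Definition in_Omega2 (n : nat) (i0 : 'Z_n) : Prop :=
  forall i : nat, odd i -> 1 <= i <= n -> ~ in_phi2 n i ->
    ((i0 - (i%:R : 'Z_n))%R \is a GRing.unit).

(* Main.v *)
Require Import Defs.
From HB Require Import structures.
From mathcomp Require Import all_boot all_order all_algebra.
From mathcomp Require Import zify.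
Import GRing.Theory.
Local Open Scope nat_scope.

Lemma Zn_diff (n a i : nat) : 1 < n -> i <= n ->
  ((a%:R : 'Z_n)%R - (i%:R : 'Z_n)%R)%R = ((a + (n - i))%:R : 'Z_n)%R.
Proof.
move=> n1 le; rewrite natrD natrB // pchar_Zp // GRing.add0r.
by rewrite GRing.addrC.
Qed.

Lemma helper1 (a b i : nat) : prime a -> prime b -> odd a -> odd b -> a != b ->
  odd i -> 1 <= i <= a * b -> b %| i -> ~~ (a %| 2 * a + 2 * b + (a * b - i)).
Proof.
move=> pa pb oa ob nab.
have a2 : 2 < a by case: a pa oa {nab} => [|[|[|a]]].
have b2 : 2 < b by case: b pb ob {nab} => [|[|[|b]]].
move=> oi /andP[i1 iab] /dvdnP[k ik]; subst i.
have ko : odd k by move: oi; rewrite oddM => /andP[].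
have kle : k <= a by rewrite -(leq_pmul2r (ltnW (ltnW b2))).
have kb : k * b <= a * b by rewrite leq_mul2r kle orbT.
have -> : 2 * a + 2 * b + (a * b - k * b) = a * 2 + b * (a + 2 - k).
  rewrite mulnBr mulnDr [b * a]mulnC [b * k]mulnC; lia.
rewrite dvdn_addr; last exact: dvdn_mulr.
rewrite Gauss_dvdr; last first.
  by rewrite prime_coprime // dvdn_prime2.
apply/negP => /dvdnP[q hq].
have q1 : q = 1.
  case: q hq => [|[|q]] hq; [lia| done | rewrite !mulSn in hq; lia].
subst q.
have k2 : k = 2 by lia.
by rewrite k2 in ko.
Qed.

Lemma helper2 (a b i : nat) : prime a -> prime b -> odd a -> odd b -> a != b ->
  i <= a * b -> a %| i -> ~~ (a %| 2 * a + 2 * b + (a * b - i)).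
Proof.
move=> pa pb oa ob nab iab ai; apply/negP => ax.
have : a %| (2 * a + 2 * b + (a * b - i)) + i by rewrite dvdn_add.
have -> : 2 * a + 2 * b + (a * b - i) + i = 2 * b + a * (2 + b) by lia.
rewrite dvdn_addl; last exact: dvdn_mulr.
rewrite Euclid_dvdM // (dvdn_prime2 pa pb) (negbTE nab) orbF.
have a2 : 2 < a by case: a pa oa {nab iab ai ax} => [|[|[|a]]].
by move/(dvdn_leq (isT : 0 < 2)); lia.
Qed.

Lemma not_phi2 (n i p : nat) : prime p -> odd p -> p %| n -> p %| i -> ~ in_phi2 n i.
Proof.
move=> pp op pn pi [w hw].
have : p %| 2 ^ w by rewrite -hw gcdn_modl dvdn_gcd pi pn.
rewrite Euclid_dvdX // => /andP[] /(dvdn_leq (isT : 0 < 2)).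
by case: p pp op {pn pi hw} => [|[|[|p]]].
Qed.

Lemma phi2_coprime (n i : nat) : coprime n i -> in_phi2 n i.
Proof.
by move=> c; exists 0; rewrite gcdn_modl gcdnC; apply/eqP.
Qed.

Lemma part2 (p1 p2 n t : nat) : prime p1 -> prime p2 -> odd p1 -> odd p2 -> p1 != p2 ->
  n = p1 * p2 * t -> 2 <= t -> forall i0 : 'Z_n, ~ in_Omega2 i0.
Proof.
move=> pp1 pp2 o1 o2 n12 hn t2 i0 H.
have a2 : 2 < p1 by case: p1 pp1 o1 {n12 hn H i0} => [|[|[|a]]].
have b2 : 2 < p2 by case: p2 pp2 o2 {n12 hn H i0} => [|[|[|b]]].
have co : coprime p1 (2 * p2).
  rewrite coprimeMr !prime_coprime // (dvdn_prime2 pp1 pp2) n12 andbT.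
  apply/negP => H2; have := dvdn_leq (isT : 0 < 2) H2; lia.
set m := nat_of_ord i0.
set c := chinese p1 (2 * p2) m p2.
set M := p1 * (2 * p2).
set i := c %% M.
have M0 : 0 < M by rewrite /M; lia.
have iM : i < M by rewrite ltn_pmod.
have Mn : M <= n by rewrite hn /M [2 * p2]mulnC mulnA leq_mul2l t2 orbT.
have n1 : 1 < n by lia.
have ip1 : i = m %[mod p1].
  by rewrite /i (@modn_dvdm M c p1 (dvdn_mulr _ (dvdnn _))) /c chinese_modl.
have ip2 : i %% (2 * p2) = p2.
  rewrite /i (@modn_dvdm M c (2 * p2) (dvdn_mull p1 (dvdnn _))) /c chinese_modr //.
  rewrite modn_small //; lia.
have oi : odd i.
  have := modn_dvdm i (dvdn_mulr p2 (dvdnn 2)); rewrite ip2 !modn2.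
  by case: (odd i); case: (odd p2) o2.
have d2 : p2 %| i.
  apply/eqP; have := modn_dvdm i (dvdn_mull 2 (dvdnn p2)); rewrite ip2 modnn.
  by move->.
have i1 : 1 <= i by case: (i) oi.
have := H i oi; rewrite i1 /= => /(_ (leq_trans (ltnW iM) Mn)).
have dn2 : p2 %| n by rewrite hn -mulnA mulnCA dvdn_mulr.
move=> /(_ (@not_phi2 n i p2 pp2 o2 dn2 d2)).
rewrite -(natr_Zp i0) Zn_diff //; last by lia.
rewrite unitZpE //.
have dn1 : p1 %| n by rewrite hn -mulnA dvdn_mulr.
have key : p1 %| m + (n - i).
  have le1 : i <= n by exact: (leq_trans (ltnW iM) Mn).
  rewrite addnBA // -eqn_mod_dvd; last exact: (leq_trans le1 (leq_addl _ _)).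
  by rewrite -modnDmr (eqP dn1) addn0 ip1.
move/(coprime_dvdl dn1); rewrite prime_coprime //.
by rewrite key.
Qed.

Theorem lemma7p3 (p1 p2 : nat) :
  prime p1 -> prime p2 -> odd p1 -> odd p2 -> p1 != p2 ->
  (forall n : nat, n = p1 * p2 -> exists i0 : 'Z_n, in_Omega2 i0) /\
  (forall n n' : nat, 1 <= n' ->
     (n = p1 * p2 ^ 2 * n' \/ n = 2 * p1 * p2 * n') ->
     forall i0 : 'Z_n, ~ in_Omega2 i0).
Proof.
move=> pp1 pp2 o1 o2 n12.
have a2 : 2 < p1 by case: p1 pp1 o1 {n12} => [|[|[|a]]].
have b2 : 2 < p2 by case: p2 pp2 o2 {n12} => [|[|[|b]]].
have n21 : p2 != p1 by rewrite eq_sym.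
split.
  move=> n ->; exists ((2 * p1 + 2 * p2)%:R)%R.
  move=> i oi /andP[i1 iab] nphi.
  have n1 : 1 < p1 * p2 by nia.
  rewrite Zn_diff // unitZpE // coprimeMl !prime_coprime //.
  have e : 2 * p1 + 2 * p2 + (p1 * p2 - i) = 2 * p2 + 2 * p1 + (p2 * p1 - i).
    by rewrite (mulnC p1) (addnC (2 * p1)).
  have iab' : i <= p2 * p1 by rewrite mulnC.
  have [d1|d1] := boolP (p1 %| i).
    rewrite (@helper2 p1 p2 i pp1 pp2 o1 o2 n12 iab d1) /= e.
    by rewrite (@helper1 p2 p1 i pp2 pp1 o2 o1 n21 oi _ d1) // i1.
  have [d2|d2] := boolP (p2 %| i).
    rewrite (@helper1 p1 p2 i pp1 pp2 o1 o2 n12 oi _ d2) ?i1 //= e.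
    by rewrite (@helper2 p2 p1 i pp2 pp1 o2 o1 n21 iab' d2).
  exfalso; apply: nphi; apply: phi2_coprime.
  by rewrite coprimeMl !prime_coprime // d1 d2.
move=> n n' n1 [hn|hn].
  apply: (@part2 p1 p2 n (p2 * n')) => //.
    by rewrite hn expnS expn1 -!mulnA.
  by rewrite -(muln1 2) leq_mul //; lia.
apply: (@part2 p1 p2 n (2 * n')) => //.
  by rewrite hn !mulnA (mulnC 2 p1) -(mulnA p1 2 p2) (mulnC 2 p2) !mulnA.
by rewrite -{1}(muln1 2) leq_mul.
Qed.
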